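(* Let $P$ be a finite poset. For every $k=0,1,\ldots,\#P$, the $k$-chain distribution $\mathrm{chain}(k)$ on the distributive lattice $J(P)$ is toggle-symmetric.
   Context: $J(P)$ is the set of order ideals (down-closed subsets) of $P$ ordered by inclusion. A $k$-chain of $J(P)$ is $I_0\subsetneq I_1\subsetneq\cdots\subsetneq I_k$; $\mathrm{chain}(k)$ gives $I\in J(P)$ probability $\#\{k\text{-chains containing } I\}/((k+1)\#\{k\text{-chains of } J(P)\})$. For $p\in P$ and $I\in J(P)$: $\mathcal{T}^+_p(I)=1$ if $p\notin I$ and $p$ is a minimal element of $P\setminus I$, else $0$; $\mathcal{T}^-_p(I)=1$ if $p\in I$ and $p$ is a maximal element of $I$, else $0$. A distribution $\mu$ on $J(P)$ is toggle-symmetric if $\mathbb{E}(\mu;\mathcal{T}^+_p)=\mathbb{E}(\mu;\mathcal{T}^-_p)$ for all $p\in P$, where $\mathbb{E}(\mu;f)=\sum_I f(I)\mathbb{P}(\mu;I)$. *)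

(* Defs.v *)
From HB Require Import structures.
From mathcomp Require Import all_boot all_order all_algebra.
Set Implicit Arguments. Unset Strict Implicit. Unset Printing Implicit Defensive.
Import Order.TTheory GRing.Theory Num.Theory.

Section Defs.
Variables (d : Order.disp_t) (P : finPOrderType d).

Definition is_ideal (I : {set P}) : bool :=
  [forall x : P, forall y : P, ((x \in I) && (y <= x)%O) ==> (y \in I)].

Definition kchain (k : nat) (c : {ffun 'I_k.+1 -> {set P}}) : bool :=
  [forall i, is_ideal (c i)] &&
  [forall i : 'I_k.+1, forall j : 'I_k.+1, (i < j)%N ==> (c i \proper c j)].

Definition num_kchains (k : nat) : nat := #|[set c : {ffun 'I_k.+1 -> {set P}} | kchain c]|.

Definition num_kchains_containing (k : nat) (I : {set P}) : nat :=
  #|[set c : {ffun 'I_k.+1 -> {set P}} | kchain c & [exists i, c i == I]]|.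

Definition chain_prob (k : nat) (I : {set P}) : rat :=
  ((num_kchains_containing k I)%:R / ((k.+1 * num_kchains k)%N)%:R)%R.

Definition Tplus (p : P) (I : {set P}) : bool :=
  (p \notin I) && [forall q : P, (q \notin I) ==> ~~ (q < p)%O].

Definition Tminus (p : P) (I : {set P}) : bool :=
  (p \in I) && [forall q : P, (q \in I) ==> ~~ (p < q)%O].

Definition expect (mu : {set P} -> rat) (f : {set P} -> bool) : rat :=
  (\sum_(I : {set P} | is_ideal I) (f I)%:R * mu I)%R.

Definition toggle_symmetric (mu : {set P} -> rat) : Prop :=
  forall p : P, expect mu (Tplus p) = expect mu (Tminus p).

End Defs.

(* Main.v *)
Require Import Defs.
From mathcomp Require Import all_boot all_order all_algebra.
From mathcomp Require Import zify.
Set Implicit Arguments. Unset Strict Implicit. Unset Printing Implicit Defensive.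
Import Order.TTheory GRing.Theory Num.Theory.

Lemma sum_lt_min n m : \sum_(i < n) (i < m) = minn m n.
Proof.
elim: n => [|n IH]; first by rewrite big_ord0; lia.
rewrite big_ord_recr /= IH; case: (ltnP n m) => /= H; lia.
Qed.

Lemma sum_lt n m : m <= n -> \sum_(i < n) (i < m) = m.
Proof. by move=> H; rewrite sum_lt_min; lia. Qed.

Lemma sum_range n a b : a <= b <= n ->
  \sum_(i < n) ((a <= i) && (i < b)) = b - a.
Proof.
move=> /andP [Hab Hbn].
have E : \sum_(i < n) (i < b) = \sum_(i < n) (i < a) + \sum_(i < n) ((a <= i) && (i < b)).
  rewrite -big_split /=; apply: eq_bigr => i _.
  by case: (ltnP i a) => H1; case: (ltnP i b) => H2 /=; lia.
move: E; rewrite !sum_lt //; [lia | exact: leq_trans Hbn].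
Qed.

Lemma mono_count n (b : 'I_n -> bool) :
  (forall i j : 'I_n, i <= j -> b i -> b j) ->
  forall i : 'I_n, b i = (\sum_(j < n) ~~ b j <= i).
Proof.
move=> Hb i; apply/idP/idP.
- move=> bi; apply: (@leq_trans (\sum_(j < n) (j < i))).
    apply: leq_sum => j _; case: (ltnP j i) => Hij; first exact: leq_b1.
    by rewrite (Hb i j Hij bi).
  by rewrite sum_lt // ltnW.
- move=> H; apply/negPn/negP => nbi; move: H; apply/negP; rewrite -ltnNge.
  rewrite -{1}(@sum_lt n i.+1) //.
  apply: leq_sum => j _; case: (ltnP j i.+1) => Hji; last by [].
  case bj: (b j) => //=; case/negP: nbi; exact: Hb Hji bj.
Qed.

Definition phi (a b u : nat) : nat :=
  if a < u then (if u <= b then u.-1 else u)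
  else if u < a then (if b <= u then u.+1 else u) else u.

Ltac phit := rewrite /phi;
  repeat match goal with
  | |- context [if ?a < ?u then _ else _] => case: (ltnP a u) => ?
  | |- context [if ?a <= ?u then _ else _] => case: (leqP a u) => ?
  end; lia.

Lemma phi_inv a b u : u != b -> phi a b (phi b a u) = u.
Proof. move=> /eqP ?; rewrite /phi; case: (ltnP b u) => ?; case: (leqP u a) => ?; case: (ltnP u b) => ?;
  case: (leqP a u) => ? /=; phit. Qed.
Lemma phi_neq a b u : u != b -> phi b a u != a.
Proof. move=> /eqP ?; apply/eqP; phit. Qed.
Lemma phi_mono a b u w : u <= w -> u != a -> w != a -> phi a b u <= phi a b w.
Proof. move=> ? /eqP ? /eqP ?; phit. Qed.
Lemma phi_id_lo a b u : u < a -> u < b -> phi a b u = u.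
Proof. move=> ? ?; phit. Qed.
Lemma phi_id_hi a b u : a < u -> b < u -> phi a b u = u.
Proof. move=> ? ?; phit. Qed.
Lemma phi_range K a b u : 0 < a -> 0 < b -> a <= K -> b <= K -> 0 < u <= K -> 0 < phi a b u <= K.
Proof. move=> ? ? ? ? /andP [? ?]; apply/andP; split; phit. Qed.

Section Main.
Variables (d : Order.disp_t) (P : finPOrderType d) (k : nat) (p : P).
Local Notation n := k.+1.

Definition fof (c : {ffun 'I_n -> {set P}}) : {ffun P -> nat} :=
  [ffun x => \sum_(i < n) (x \notin c i)].
Definition cof (f : {ffun P -> nat}) : {ffun 'I_n -> {set P}} :=
  [ffun i : 'I_n => [set x | f x <= i]].
Definition good (f : {ffun P -> nat}) : Prop :=
  [/\ forall x, f x <= n, forall x y, (x <= y)%O -> f x <= f y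
    & forall v, 0 < v <= k -> exists x, f x = v].

Lemma kchain_sub (c : {ffun 'I_n -> {set P}}) : kchain c ->
  forall i j : 'I_n, i <= j -> c i \subset c j.
Proof.
move=> /andP [_ /forallP Hch] i j; rewrite leq_eqVlt => /orP [/eqP E|lt].
  by rewrite (val_inj E).
by move/forallP: (Hch i) => /(_ j) /implyP /(_ lt) /properP [].
Qed.

Lemma kchain_ideal (c : {ffun 'I_n -> {set P}}) : kchain c -> forall i, is_ideal (c i).
Proof. by move=> /andP [/forallP H _]. Qed.

Lemma kchain_mem c : kchain c -> forall i x, (x \in c i) = (fof c x <= i).
Proof.
move=> Hc i x; rewrite ffunE.
have H := @mono_count n (fun j => x \in c j).
rewrite H //= => j l jl; exact: (subsetP (kchain_sub Hc jl)).
Qed.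

Lemma fof_le c x : fof c x <= n.
Proof.
rewrite ffunE; apply: (@leq_trans (\sum_(i < n) 1)).
  by apply: leq_sum => i _; exact: leq_b1.
by rewrite sum1_card card_ord.
Qed.

Lemma kchain_good c : kchain c -> good (fof c).
Proof.
move=> Hc; split.
- exact: fof_le.
- move=> x y xy; case: (ltnP (fof c y) n) => H; last exact: leq_trans (fof_le c x) H.
  have := kchain_mem Hc (Ordinal H) y; rewrite leqnn => /= Hy.
  have : x \in c (Ordinal H).
    by move/forallP: (kchain_ideal Hc (Ordinal H)) => /(_ y) /forallP /(_ x) /implyP; apply; rewrite Hy xy.
  by rewrite kchain_mem.
- move=> v /andP [v0 vk].
  have vn : v < n by lia.
  have v1n : v.-1 < n by lia.
  have lt : Ordinal v1n < Ordinal vn by rewrite /=; lia.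
  move/andP: (Hc) => [_ /forallP Hch].
  move/forallP: (Hch (Ordinal v1n)) => /(_ (Ordinal vn)) /implyP /(_ lt) /properP [_ [x Hx1 Hx2]].
  exists x; move: Hx1 Hx2; rewrite !(kchain_mem Hc) /=; lia.
Qed.

Lemma good_kchain (f : {ffun P -> nat}) : good f -> kchain (cof f).
Proof.
move=> [Hb Hm Hs]; apply/andP; split.
  apply/forallP => i; apply/forallP => x; apply/forallP => y; apply/implyP.
  rewrite !ffunE !inE => /andP [Hx Hyx]; exact: leq_trans (Hm _ _ Hyx) Hx.
apply/forallP => i; apply/forallP => j; apply/implyP => ij.
apply/properP; split.
  apply/subsetP => x; rewrite !ffunE !inE => H; exact: leq_trans H (ltnW ij).
have [x Hx] : exists x, f x = j.
  apply: Hs; have := ltn_ord j; lia.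
by exists x; rewrite !ffunE !inE Hx // -ltnNge.
Qed.

Lemma cofE (f : {ffun P -> nat}) (i : 'I_n) x : (x \in cof f i) = (f x <= i).
Proof. by rewrite ffunE inE. Qed.

Lemma fof_cof (f : {ffun P -> nat}) : (forall x, f x <= n) -> fof (cof f) = f.
Proof.
move=> Hb; apply/ffunP => x; rewrite ffunE.
under eq_bigr do rewrite cofE -ltnNge.
exact: sum_lt.
Qed.

Lemma cof_fof c : kchain c -> cof (fof c) = c.
Proof.
move=> Hc; apply/ffunP => i; apply/setP => x; by rewrite cofE (kchain_mem Hc).
Qed.

Definition lo (f : {ffun P -> nat}) := \max_(q | (q < p)%O) f q.
Definition hi (f : {ffun P -> nat}) := n - \max_(q | (p < q)%O) (n - f q).

Lemma lo_le (f : {ffun P -> nat}) : good f -> lo f <= f p.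
Proof. by move=> [_ Hm _]; apply/bigmax_leqP => q qp; apply: Hm; exact: ltW. Qed.

Lemma hi_ge (f : {ffun P -> nat}) : good f -> f p <= hi f <= n.
Proof.
move=> [Hb Hm _]; rewrite /hi.
have : \max_(q | (p < q)%O) (n - f q) <= n - f p.
  apply/bigmax_leqP => q pq; have := Hm _ _ (ltW pq); lia.
have := Hb p; lia.
Qed.

Lemma lo_ge (f : {ffun P -> nat}) q : (q < p)%O -> f q <= lo f.
Proof. by move=> qp; rewrite /lo; apply: leq_bigmax_cond. Qed.

Lemma hi_le (f : {ffun P -> nat}) q : good f -> (p < q)%O -> hi f <= f q.
Proof.
move=> [Hb _ _] pq; rewrite /hi.
have : n - f q <= \max_(q | (p < q)%O) (n - f q) by apply: leq_bigmax_cond.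
have := Hb q; lia.
Qed.

Lemma Tplus_cof (f : {ffun P -> nat}) (i : 'I_n) : Tplus p (cof f i) = (lo f <= i) && (i < f p).
Proof.
rewrite /Tplus cofE -ltnNge andbC; congr (_ && _).
apply/forallP/bigmax_leqP => H q.
  move=> qp; move/implyP: (H q); rewrite cofE -ltnNge.
  by case: ltnP => // _ /(_ isT); rewrite qp.
have Hq := H q; apply/implyP; rewrite cofE -ltnNge.
by apply: contraL => qp; have := Hq qp; lia.
Qed.

Lemma Tminus_cof (f : {ffun P -> nat}) (i : 'I_n) : good f -> Tminus p (cof f i) = (f p <= i) && (i < hi f).
Proof.
move=> [Hb _ _].
rewrite /Tminus cofE; congr (_ && _).
have Hi := ltn_ord i.
transitivity (\max_(q | (p < q)%O) (n - f q) <= k - i); last first.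
  rewrite /hi; apply/idP/idP; lia.
apply/forallP/bigmax_leqP => H q.
  move=> pq; move/implyP: (H q); rewrite cofE.
  have := Hb q; case: (leqP (f q) i) => fi; first by move=> _ /(_ isT); rewrite pq.
  lia.
have Hq := H q; apply/implyP; rewrite cofE.
apply: contraL => pq; have := Hq pq; have := Hb q; lia.
Qed.

Lemma X_cof (f : {ffun P -> nat}) : good f -> \sum_(i < n) Tplus p (cof f i) = f p - lo f.
Proof.
move=> Hf; under eq_bigr do rewrite Tplus_cof.
apply: sum_range; rewrite lo_le //; case: Hf => Hb _ _; exact: Hb.
Qed.

Lemma Y_cof (f : {ffun P -> nat}) : good f -> \sum_(i < n) Tminus p (cof f i) = hi f - f p.
Proof.
move=> Hf; under eq_bigr => i _ do rewrite Tminus_cof //.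
apply: sum_range; exact: hi_ge.
Qed.


Definition alone (f : {ffun P -> nat}) :=
  (0 < f p <= k) && [forall x, (x != p) ==> (f x != f p)].
Definition tau (f : {ffun P -> nat}) : {ffun P -> nat} :=
  [ffun x => if x == p then lo f + hi f - f p
             else if alone f then phi (f p) (lo f + hi f - f p) (f x) else f x].

Lemma tauE (f : {ffun P -> nat}) x : tau f x = if x == p then lo f + hi f - f p
             else if alone f then phi (f p) (lo f + hi f - f p) (f x) else f x.
Proof. by rewrite ffunE. Qed.

Lemma alone_neq (f : {ffun P -> nat}) x : alone f -> x != p -> f x != f p.
Proof. by move=> /andP [_ /forallP /(_ x) /implyP]. Qed.

Lemma alone_bounds (f : {ffun P -> nat}) : good f -> alone f -> lo f < f p < hi f.
Proof.
move=> Hf Hal; have /andP [/andP [H0 Hk] _] := Hal; case: (Hf) => Hb Hm _.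
apply/andP; split.
  have : lo f <= (f p).-1; last lia.
  apply/bigmax_leqP => q qp; have := Hm _ _ (ltW qp).
  have qp' : q != p by rewrite (lt_eqF qp).
  have /eqP := alone_neq Hal qp'; lia.
rewrite /hi; have : \max_(q | (p < q)%O) (n - f q) <= n - (f p).+1; last by have := Hb p; lia.
apply/bigmax_leqP => q pq; have := Hm _ _ (ltW pq); have := Hb q.
have qp' : q != p by rewrite (gt_eqF pq).
have /eqP := alone_neq Hal qp'; lia.
Qed.

Lemma tau_same (f : {ffun P -> nat}) q : good f -> ((q < p)%O || (p < q)%O) -> tau f q = f q.
Proof.
move=> Hf Hq; rewrite tauE.
have -> : (q == p) = false by case/orP: Hq => H; [rewrite (lt_eqF H) | rewrite (gt_eqF H)].
case: ifP => // Hal; have /andP [H1 H2] := alone_bounds Hf Hal.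
have Hl := lo_le Hf; have /andP [Hh1 Hh2] := hi_ge Hf.
case/orP: Hq => Hq.
  have := lo_ge f Hq => ?; apply: phi_id_lo; lia.
have := hi_le Hf Hq => ?; apply: phi_id_hi; lia.
Qed.

Lemma tau_lo (f : {ffun P -> nat}) : good f -> lo (tau f) = lo f.
Proof. by move=> Hf; rewrite /lo; apply: eq_bigr => q qp; rewrite tau_same // qp. Qed.

Lemma tau_hi (f : {ffun P -> nat}) : good f -> hi (tau f) = hi f.
Proof.
move=> Hf; rewrite /hi; congr (_ - _); apply: eq_bigr => q qp.
by rewrite tau_same // qp orbT.
Qed.

Lemma tau_p (f : {ffun P -> nat}) : tau f p = lo f + hi f - f p.
Proof. by rewrite tauE eqxx. Qed.

Lemma tau_good (f : {ffun P -> nat}) : good f -> good (tau f).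
Proof.
move=> Hf; have Hl := lo_le Hf; have /andP [Hh1 Hh2] := hi_ge Hf.
case: (Hf) => Hb Hm Hs; split.
- move=> x; rewrite tauE; case: eqP => _; first lia.
  case: ifP => Hal; last exact: Hb.
  have /andP [H1 H2] := alone_bounds Hf Hal.
  move: (Hal) => /andP [/andP [? ?] _]; have := Hb x => ?; phit.
- move=> x y xy.
  case: (eqVneq x p) => [Ex|xp]; case: (eqVneq y p) => [Ey|yp].
  + by rewrite Ex Ey.
  + have py : (p < y)%O by rewrite lt_def yp -Ex xy.
    rewrite (tau_same (q := y)) ?py ?orbT // Ex tau_p; have := hi_le Hf py; lia.
  + have xp' : (x < p)%O by rewrite lt_def eq_sym xp -Ey xy.
    rewrite (tau_same (q := x)) ?xp' // Ey tau_p; have := lo_ge f xp'; lia.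
  + rewrite !tauE (negbTE xp) (negbTE yp); case: ifP => Hal; last exact: Hm.
    by apply: phi_mono; [exact: Hm | exact: alone_neq | exact: alone_neq].
- move=> v Hv; case: (boolP (alone f)) => Hal.
  + have /andP [H1 H2] := alone_bounds Hf Hal.
    move: (Hal) => /andP [/andP [? ?] _].
    case: (eqVneq v (lo f + hi f - f p)) => [->|vb]; first by exists p; exact: tau_p.
    have Hr : 0 < phi (lo f + hi f - f p) (f p) v <= k.
      by apply: phi_range => //; lia.
    have [x Hx] := Hs _ Hr.
    have xp : x != p.
      apply/eqP => E; move: (phi_neq (f p) vb); rewrite -Hx E eqxx //.
    by exists x; rewrite tauE (negbTE xp) Hal Hx phi_inv.
  + have [x Hx] := Hs v Hv; case: (eqVneq x p) => [E|xp].
    * have : ~~ [forall x, (x != p) ==> (f x != f p)].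
        by move: Hal; rewrite /alone -E Hx Hv.
      rewrite negb_forall => /existsP [y]; rewrite negb_imply negbK => /andP [yp /eqP fy].
      by exists y; rewrite tauE (negbTE yp) (negbTE Hal) fy -E Hx.
    * by exists x; rewrite tauE (negbTE xp) (negbTE Hal).
Qed.

Lemma alone_tau (f : {ffun P -> nat}) : good f -> alone (tau f) = alone f.
Proof.
move=> Hf; have Hl := lo_le Hf; have /andP [Hh1 Hh2] := hi_ge Hf.
case: (Hf) => Hb Hm Hs.
case: (boolP (alone f)) => Hal.
  have /andP [H1 H2] := alone_bounds Hf Hal.
  apply/andP; split; first by rewrite tau_p; apply/andP; split; lia.
  apply/forallP => x; apply/implyP => xp.
  rewrite tauE (negbTE xp) Hal tau_p; apply: phi_neq; exact: alone_neq.
apply/negP => /andP [/andP [Hb0 Hbk] /forallP Ha].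
move: Hb0 Hbk Ha; rewrite tau_p => Hb0 Hbk Ha.
case: (eqVneq (lo f + hi f - f p) (f p)) => [E|ne].
  move/negP: (Hal); apply; apply/andP; split; first by rewrite -E Hb0 Hbk.
  apply/forallP => x; apply/implyP => xp; move/implyP: (Ha x) => /(_ xp).
  by rewrite tauE (negbTE xp) (negbTE Hal) E.
have [y Hy] : exists y, f y = lo f + hi f - f p by apply: Hs; rewrite Hb0 Hbk.
have yp : y != p by apply/eqP => E; move: Hy; rewrite E => Hy; rewrite -Hy eqxx in ne.
move/implyP: (Ha y) => /(_ yp); by rewrite tauE (negbTE yp) (negbTE Hal) Hy eqxx.
Qed.

Lemma tau_invol (f : {ffun P -> nat}) : good f -> tau (tau f) = f.
Proof.
move=> Hf; have Hl := lo_le Hf; have /andP [Hh1 Hh2] := hi_ge Hf.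
apply/ffunP => x; rewrite (tauE (tau f)) tau_lo // tau_hi // tau_p alone_tau //.
have E : lo f + hi f - (lo f + hi f - f p) = f p by lia.
rewrite E; case: (eqVneq x p) => [->|xp] //.
rewrite tauE (negbTE xp); case: ifP => Hal.
  by rewrite Hal phi_inv //; exact: alone_neq.
by rewrite Hal.
Qed.


Definition sigma (c : {ffun 'I_n -> {set P}}) :=
  if kchain c then cof (tau (fof c)) else c.

Lemma sigma_kchain c : kchain (sigma c) = kchain c.
Proof.
rewrite /sigma; case: ifP => // Hc.
by apply: good_kchain; apply: tau_good; apply: kchain_good.
Qed.

Lemma sigma_invol : involutive sigma.
Proof.
move=> c; case: (boolP (kchain c)) => Hc; last by rewrite /sigma (negbTE Hc) (negbTE Hc).
have Hs := sigma_kchain c; rewrite Hc in Hs.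
rewrite {1}/sigma Hs /sigma Hc.
have Hg := kchain_good Hc.
have [Hb _ _] := tau_good Hg.
by rewrite fof_cof // tau_invol // cof_fof.
Qed.

Lemma XY_sum : \sum_(c | kchain c) \sum_(i < n) Tplus p (c i) =
               \sum_(c | kchain c) \sum_(i < n) Tminus p (c i).
Proof.
rewrite (reindex_inj (inv_inj sigma_invol)) /=.
apply: eq_big => c; first exact: sigma_kchain.
move=> Hc; rewrite sigma_kchain in Hc; rewrite /sigma Hc.
have Hg := kchain_good Hc; have Htg := tau_good Hg.
transitivity (\sum_(i < n) Tminus p (cof (fof c) i)); last by rewrite cof_fof.
rewrite X_cof // tau_lo // tau_p Y_cof //.
have := lo_le Hg; have := hi_ge Hg; lia.
Qed.

End Main.

Section Final.
Variables (d : Order.disp_t) (P : finPOrderType d) (k : nat).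

Lemma kchain_inj (c : {ffun 'I_k.+1 -> {set P}}) : kchain c -> injective c.
Proof.
move=> /andP [_ /forallP Hch] i j Eij; apply: val_inj.
case: (ltngtP i j) => // lt.
  by move/forallP: (Hch i) => /(_ j) /implyP /(_ lt); rewrite Eij properE subxx.
by move/forallP: (Hch j) => /(_ i) /implyP /(_ lt); rewrite Eij properE subxx.
Qed.

Lemma sum_ideals (T : {set P} -> bool) :
  \sum_(I | is_ideal I) T I * num_kchains_containing k I =
  \sum_(c : {ffun 'I_k.+1 -> {set P}} | kchain c) \sum_(i < k.+1) T (c i).
Proof.
rewrite /num_kchains_containing.
under eq_bigr => I _ do rewrite -sum1_card big_distrr /= muln1.
have E1 : forall I : {set P},
  \sum_(c in [set c : {ffun 'I_k.+1 -> {set P}} | kchain c & [exists i, c i == I]]) T I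
  = \sum_(c : {ffun 'I_k.+1 -> {set P}} | kchain c) ([exists i, c i == I] && T I).
  move=> I; rewrite big_mkcond [RHS]big_mkcond; apply: eq_bigr => c _; rewrite inE.
  by case: (kchain c); case: [exists i, c i == I]; case: (T I).
under eq_bigr => I _ do rewrite E1.
rewrite exchange_big /=; apply: eq_bigr => c Hc.
transitivity (\sum_(I in c @: setT) T I).
  rewrite big_mkcond [RHS]big_mkcond; apply: eq_bigr => I _.
  have -> : [exists i, c i == I] = (I \in c @: setT).
    apply/existsP/imsetP => [[i /eqP <-]|[i _ ->]]; first by exists i; rewrite ?in_setT.
    by exists i.
  case: (boolP (I \in c @: setT)) => HI /=; last by case: ifP.
  have -> : is_ideal I by move/imsetP: HI => [i _ ->]; exact: kchain_ideal.
  by [].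
rewrite big_imset /=; last by move=> i j _ _; apply: kchain_inj.
by apply: eq_bigl => i; rewrite in_setT.
Qed.

Local Open Scope ring_scope.

Lemma expect_eq (T : {set P} -> bool) :
  expect (@chain_prob d P k) T =
  (\sum_(c : {ffun 'I_k.+1 -> {set P}} | kchain c) \sum_(i < k.+1) T (c i))%N%:R
   / ((k.+1 * @num_kchains d P k)%N)%:R.
Proof.
rewrite /expect /chain_prob -sum_ideals natr_sum mulr_suml; apply: eq_bigr => I _.
by rewrite (natrM _ (T I)) mulrA.
Qed.

End Final.

Theorem lemma3p3 (d : Order.disp_t) (P : finPOrderType d) (k : nat) :
  (k <= #|P|)%N -> @toggle_symmetric d P (@chain_prob d P k).
Proof.
move=> _ p; by rewrite !expect_eq XY_sum.
Qed.
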